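(* Both $\mathcal{P}$ and $\overline{\mathcal{P}}$ are $(1,1,2)$-quasi-balanced, i.e. if $(a,s,p)$ belongs to the set and $z\in\Delta$ then $(za,zs,z^2p)$ belongs to the set; both are starlike about $(0,0,0)$, i.e. if $x$ belongs to the set and $0\le r\le 1$ then $rx$ belongs to the set. Neither $\mathcal{P}$ nor $\overline{\mathcal{P}}$ is circled, i.e. for each of them there exist a point $x$ of the set and $\omega\in\mathbb{T}$ with $\omega x$ not in the set.
   Context: $\Delta$ is the closed unit disc and $\mathbb{T}$ the unit circle. $\mathbb{B}$ is the open unit ball of $\mathbb{C}^{2\times 2}$ (operator norm), $\pi(A)=(a_{21},\operatorname{tr}A,\det A)$, $\mathcal{P}=\pi(\mathbb{B})$, $\overline{\mathcal{P}}$ its closure. *)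

(* Defs.v *)
From Stdlib Require Import Reals.
Open Scope R_scope.

Record C := mkC { re : R; im : R }.
Definition Cadd (z w : C) : C := mkC (re z + re w) (im z + im w).
Definition Csub (z w : C) : C := mkC (re z - re w) (im z - im w).
Definition Cmul (z w : C) : C :=
  mkC (re z * re w - im z * im w) (re z * im w + im z * re w).
Definition RtoC (r : R) : C := mkC r 0.
Definition Cnorm2 (z : C) : R := re z * re z + im z * im z.

Definition in_Delta (z : C) : Prop := Cnorm2 z <= 1.
Definition in_T (z : C) : Prop := Cnorm2 z = 1.

Record C2 := mkC2 { v1 : C; v2 : C }.
Definition C2norm2 (v : C2) : R := Cnorm2 (v1 v) + Cnorm2 (v2 v).
Record M2 := mkM2 { a11 : C; a12 : C; a21 : C; a22 : C }.
Definition Mapply (A : M2) (v : C2) : C2 :=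
  mkC2 (Cadd (Cmul (a11 A) (v1 v)) (Cmul (a12 A) (v2 v)))
       (Cadd (Cmul (a21 A) (v1 v)) (Cmul (a22 A) (v2 v))).
Definition Mtr (A : M2) : C := Cadd (a11 A) (a22 A).
Definition Mdet (A : M2) : C := Csub (Cmul (a11 A) (a22 A)) (Cmul (a12 A) (a21 A)).

Definition opnorm_le (A : M2) (c : R) : Prop :=
  forall v : C2, C2norm2 (Mapply A v) <= c * c * C2norm2 v.

(* open unit ball B of C^{2x2} in operator norm: ||A|| < 1, i.e.
   ||A|| <= c for some c < 1 (the operator norm is the least such bound) *)
Definition in_B (A : M2) : Prop := exists c : R, 0 <= c < 1 /\ opnorm_le A c.

Record C3 := mkC3 { x1 : C; x2 : C; x3 : C }.
Definition C3dist2 (x y : C3) : R :=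
  Cnorm2 (Csub (x1 x) (x1 y)) + Cnorm2 (Csub (x2 x) (x2 y)) + Cnorm2 (Csub (x3 x) (x3 y)).
Definition C3scale (w : C) (x : C3) : C3 :=
  mkC3 (Cmul w (x1 x)) (Cmul w (x2 x)) (Cmul w (x3 x)).
Definition qb_act (z : C) (x : C3) : C3 :=
  mkC3 (Cmul z (x1 x)) (Cmul z (x2 x)) (Cmul (Cmul z z) (x3 x)).

Definition piA (A : M2) : C3 := mkC3 (a21 A) (Mtr A) (Mdet A).

Definition in_P (x : C3) : Prop := exists A : M2, in_B A /\ piA A = x.
Definition in_Pbar (x : C3) : Prop :=
  forall eps : R, 0 < eps -> exists y : C3, in_P y /\ C3dist2 x y < eps.

Definition quasi_balanced_112 (S : C3 -> Prop) : Prop :=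
  forall x z, S x -> in_Delta z -> S (qb_act z x).
Definition starlike0 (S : C3 -> Prop) : Prop :=
  forall x r, S x -> 0 <= r <= 1 -> S (C3scale (RtoC r) x).
Definition circled (S : C3 -> Prop) : Prop :=
  forall x w, S x -> in_T w -> S (C3scale w x).

(* Main.v *)
Require Import Defs.
From Stdlib Require Import Reals Lra Psatz Classical.
Open Scope R_scope.

Definition form (A B hr hi x1 y1 x2 y2 : R) :=
  A*(x1*x1+y1*y1) + B*(x2*x2+y2*y2) - 2*(x1*(hr*x2 - hi*y2) + y1*(hr*y2 + hi*x2)).

Lemma psd_form A B hr hi x1 y1 x2 y2 :
  0 <= A -> 0 <= B -> hr*hr+hi*hi <= A*B -> 0 <= form A B hr hi x1 y1 x2 y2.
Proof.
  intros HA HB Hh. unfold form.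
  destruct HA as [HA|HA].
  - assert (E: A * (A*(x1*x1+y1*y1) + B*(x2*x2+y2*y2) - 2*(x1*(hr*x2 - hi*y2) + y1*(hr*y2 + hi*x2)))
       = (A*x1 - (hr*x2 - hi*y2))^2 + (A*y1 - (hr*y2+hi*x2))^2 + (A*B - (hr*hr+hi*hi))*(x2*x2+y2*y2)) by ring.
    assert (0 <= A * (A*(x1*x1+y1*y1) + B*(x2*x2+y2*y2) - 2*(x1*(hr*x2 - hi*y2) + y1*(hr*y2 + hi*x2)))).
    { rewrite E. assert (0 <= (A*B - (hr*hr+hi*hi))*(x2*x2+y2*y2)) by (apply Rmult_le_pos; [lra | apply Rplus_le_le_0_compat; apply Rle_0_sqr]).
      pose proof (pow2_ge_0 (A*x1 - (hr*x2 - hi*y2))). pose proof (pow2_ge_0 (A*y1 - (hr*y2+hi*x2))). lra. }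
    nra.
  - subst A. assert (hr = 0) by nra. assert (hi = 0) by nra. subst. nra.
Qed.

Lemma psd_conv A B hr hi :
  (forall x1 y1 x2 y2, 0 <= form A B hr hi x1 y1 x2 y2) -> 0 <= A -> 0 <= B ->
  hr*hr+hi*hi <= A*B.
Proof.
  intros H HA HB. unfold form in H.
  destruct HA as [HA|HA].
  - specialize (H hr hi A 0).
    assert (A * (A*B - (hr*hr+hi*hi)) >= 0) by nra. nra.
  - subst A. destruct (Rlt_or_le 0 (hr*hr+hi*hi)) as [Hp|Hp].
    + set (k := (B+1)/(hr*hr+hi*hi)).
      specialize (H (k*hr) (k*hi) 1 0).
      assert (k*(hr*hr+hi*hi) = B+1) by (unfold k; field; lra).
      nra.
    + nra.
Qed.

Lemma form_id a b c d e f g h x1 y1 x2 y2 cc :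
  cc*cc * C2norm2 (mkC2 (mkC x1 y1) (mkC x2 y2)) -
  C2norm2 (Mapply (mkM2 (mkC a b) (mkC c d) (mkC e f) (mkC g h)) (mkC2 (mkC x1 y1) (mkC x2 y2)))
  = form (cc*cc - (a*a+b*b+e*e+f*f)) (cc*cc - (c*c+d*d+g*g+h*h))
      (a*c+b*d+e*g+f*h) (a*d-b*c+e*h-f*g) x1 y1 x2 y2.
Proof. unfold form, C2norm2, Mapply, Cnorm2, Cadd, Cmul; simpl; ring. Qed.

Lemma gram_id a b c d e f g h :
  (a*a+b*b+e*e+f*f)*(c*c+d*d+g*g+h*h) - ((a*c+b*d+e*g+f*h)^2 + (a*d-b*c+e*h-f*g)^2)
  = Cnorm2 (Mdet (mkM2 (mkC a b) (mkC c d) (mkC e f) (mkC g h))).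
Proof. unfold Cnorm2, Mdet, Csub, Cmul; simpl; ring. Qed.

Definition Frob (A : M2) := Cnorm2 (a11 A) + Cnorm2 (a12 A) + Cnorm2 (a21 A) + Cnorm2 (a22 A).
Definition D2 (A : M2) := Cnorm2 (Mdet A).

Lemma B_to_FD A : in_B A ->
  Cnorm2 (a11 A) + Cnorm2 (a21 A) < 1 /\ Cnorm2 (a12 A) + Cnorm2 (a22 A) < 1 /\
  D2 A < 1 /\ Frob A < 1 + D2 A.
Proof.
  intros [cc [Hc Hn]]. destruct A as [[a b] [c d] [e f] [g h]].
  unfold D2, Frob; rewrite <- gram_id; unfold Cnorm2; simpl.
  assert (Hf : forall x1 y1 x2 y2, 0 <= form (cc*cc - (a*a+b*b+e*e+f*f)) (cc*cc - (c*c+d*d+g*g+h*h))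
      (a*c+b*d+e*g+f*h) (a*d-b*c+e*h-f*g) x1 y1 x2 y2).
  { intros. rewrite <- form_id. specialize (Hn (mkC2 (mkC x1 y1) (mkC x2 y2))). lra. }
  assert (H1 := Hf 1 0 0 0). assert (H2 := Hf 0 0 1 0). unfold form in H1, H2.
  assert (H1' : 0 <= cc*cc - (a*a+b*b+e*e+f*f)) by nra.
  assert (H2' : 0 <= cc*cc - (c*c+d*d+g*g+h*h)) by nra.
  assert (H3 := psd_conv _ _ _ _ Hf H1' H2').
  set (h11 := a*a+b*b+e*e+f*f) in *. set (h22 := c*c+d*d+g*g+h*h) in *.
  set (q := (a*c+b*d+e*g+f*h)^2 + (a*d-b*c+e*h-f*g)^2).
  assert (Hq : (a*c+b*d+e*g+f*h)*(a*c+b*d+e*g+f*h) + (a*d-b*c+e*h-f*g)*(a*d-b*c+e*h-f*g) = q) by (unfold q; ring).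
  rewrite Hq in H3.
  assert (0 <= q) by (unfold q; pose proof (pow2_ge_0 (a*c+b*d+e*g+f*h)); pose proof (pow2_ge_0 (a*d-b*c+e*h-f*g)); lra).
  assert (0 <= h11) by (unfold h11; nra). assert (0 <= h22) by (unfold h22; nra).
  assert (cc*cc < 1) by nra.
  assert (h11*h22 <= (cc*cc)*(cc*cc)) by (apply Rmult_le_compat; lra).
  assert ((cc*cc)*(cc*cc) < 1) by nra.
  repeat split.
  - unfold h11 in H1'; lra.
  - unfold h22 in H2'; lra.
  - lra.
  - assert (E: a*a+b*b+(c*c+d*d)+(e*e+f*f)+(g*g+h*h) = h11 + h22) by (unfold h11, h22; ring).
    rewrite E. nra.
Qed.

Lemma FD_to_B A : D2 A < 1 -> Frob A < 1 + D2 A -> in_B A.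
Proof.
  destruct A as [[a b] [c d] [e f] [g h]].
  unfold D2, Frob; rewrite <- gram_id; unfold Cnorm2; simpl.
  set (h11 := a*a+b*b+e*e+f*f). set (h22 := c*c+d*d+g*g+h*h).
  set (hr := a*c+b*d+e*g+f*h). set (hi := a*d-b*c+e*h-f*g).
  assert (EF : a*a+b*b+(c*c+d*d)+(e*e+f*f)+(g*g+h*h) = h11 + h22) by (unfold h11, h22; ring).
  rewrite EF. intros HD HF.
  assert (0 <= h11) by (unfold h11; nra). assert (0 <= h22) by (unfold h22; nra).
  pose proof (pow2_ge_0 hr). pose proof (pow2_ge_0 hi).
  set (FF := h11 + h22) in *. assert (EDD: hr*(hr*1)+hi*(hi*1) = hr*hr+hi*hi) by ring. rewrite EDD in HD, HF.
  set (DD := h11*h22 - (hr*hr+hi*hi)) in *.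
  assert (HFD : 0 <= FF*FF - 4*DD) by (unfold FF, DD; pose proof (pow2_ge_0 (h11-h22)); nra).
  set (SS := sqrt (FF*FF - 4*DD)).
  assert (HS : SS*SS = FF*FF-4*DD) by (apply sqrt_sqrt; lra).
  assert (HS0 : 0 <= SS) by apply sqrt_pos.
  set (lam := (FF + SS)/2).
  assert (HS1 : SS < 2 - FF).
  { destruct (Rlt_or_le SS (2-FF)) as [?|Hc]; auto.
    assert ((2-FF)*(2-FF) <= SS*SS) by (apply Rmult_le_compat; lra).
    assert ((2-FF)*(2-FF) = 4 - 4*FF + FF*FF) by ring. lra. }
  assert (Hlam : lam < 1) by (unfold lam; lra).
  assert (Hlam0 : 0 <= lam) by (unfold lam, FF; lra).
  assert (Hprod : (lam - h11)*(lam - h22) = hr*hr+hi*hi).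
  { assert (E1 : lam*lam - lam*FF = (SS*SS - FF*FF)/4) by (unfold lam; field).
    assert (E2 : (lam - h11)*(lam - h22) = lam*lam - lam*FF + h11*h22) by (unfold FF; ring).
    rewrite E2. rewrite HS in E1. unfold DD in E1. lra. }
  assert (Hsum : 0 <= (lam - h11) + (lam - h22)) by (unfold lam, FF; lra).
  assert (Ha : 0 <= lam - h11) by nra.
  assert (Hb : 0 <= lam - h22) by nra.
  exists (sqrt lam). split. split. apply sqrt_pos.
  rewrite <- sqrt_1. apply sqrt_lt_1_alt. lra.
  intros [[x1 y1] [x2 y2]].
  assert (Hf := form_id a b c d e f g h x1 y1 x2 y2 (sqrt lam)).
  rewrite sqrt_sqrt in Hf by lra. fold h11 h22 hr hi in Hf.
  assert (0 <= form (lam - h11) (lam - h22) hr hi x1 y1 x2 y2) by (apply psd_form; lra).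
  rewrite sqrt_sqrt by lra. lra.
Qed.

Lemma csqrt u v : exists X Y, X*X - Y*Y = u /\ 2*X*Y = v.
Proof.
  set (m := sqrt (u*u+v*v)).
  assert (Hm : m*m = u*u+v*v) by (apply sqrt_sqrt; nra).
  assert (Hm0 : 0 <= m) by apply sqrt_pos.
  assert (Hmu : - m <= u <= m).
  { split; destruct (Rlt_or_le u (-m)); destruct (Rlt_or_le m u); try lra; nra. }
  set (X := sqrt ((m+u)/2)). set (Y0 := sqrt ((m-u)/2)).
  assert (HX : X*X = (m+u)/2) by (apply sqrt_sqrt; lra).
  assert (HY : Y0*Y0 = (m-u)/2) by (apply sqrt_sqrt; lra).
  assert (HX0 : 0 <= X) by apply sqrt_pos. assert (HY0 : 0 <= Y0) by apply sqrt_pos.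
  assert (HXY : (2*X*Y0)*(2*X*Y0) = v*v).
  { replace ((2*X*Y0)*(2*X*Y0)) with (4*(X*X)*(Y0*Y0)) by ring. rewrite HX, HY. nra. }
  assert (HXY0 : 0 <= 2*X*Y0) by (apply Rmult_le_pos; lra).
  destruct (Rle_or_lt 0 v) as [Hv|Hv].
  - exists X, Y0. split. lra. nra.
  - exists X, (-Y0). split. nra. nra.
Qed.

Lemma tri xr xi yr yi k1 k2 : 0<=k1 -> 0<=k2 -> xr*xr+xi*xi = k1*k1 -> yr*yr+yi*yi <= k2*k2 ->
  (xr+yr)*(xr+yr)+(xi+yi)*(xi+yi) <= (k1+k2)*(k1+k2).
Proof.
  intros H1 H2 H3 H4.
  assert (Hcs : (xr*yr+xi*yi)*(xr*yr+xi*yi) <= (k1*k2)*(k1*k2)).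
  { assert ((xr*yr+xi*yi)*(xr*yr+xi*yi) + (xr*yi-xi*yr)*(xr*yi-xi*yr) = (xr*xr+xi*xi)*(yr*yr+yi*yi)) by ring.
    assert ((xr*xr+xi*xi)*(yr*yr+yi*yi) <= (k1*k1)*(k2*k2)) by (rewrite H3; apply Rmult_le_compat_l; nra).
    pose proof (Rle_0_sqr (xr*yi - xi*yr)). unfold Rsqr in *. lra. }
  assert (xr*yr+xi*yi <= k1*k2).
  { destruct (Rlt_or_le (k1*k2) (xr*yr+xi*yi)); auto.
    assert (0 <= k1*k2) by (apply Rmult_le_pos; lra).
    assert ((k1*k2)*(k1*k2) < (xr*yr+xi*yi)*(xr*yr+xi*yi)) by (apply Rmult_le_0_lt_compat; lra). lra. }
  nra.
Qed.

Lemma sqrt_bound X Y u v K : X*X-Y*Y = u -> 2*X*Y = v -> u*u+v*v <= K*K -> 0<=K -> X*X+Y*Y <= K.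
Proof.
  intros H1 H2 H3 H4.
  assert (E : (X*X+Y*Y)*(X*X+Y*Y) = u*u+v*v) by (rewrite <- H1, <- H2; ring).
  destruct (Rlt_or_le K (X*X+Y*Y)); auto.
  assert (K*K < (X*X+Y*Y)*(X*X+Y*Y)) by (apply Rmult_le_0_lt_compat; lra). lra.
Qed.

Lemma amgm u w q1 q2 : u*w - (q1^2+q2^2) <= (u+w)*(u+w)/4.
Proof. pose proof (pow2_ge_0 q1). pose proof (pow2_ge_0 q2). pose proof (pow2_ge_0 (u-w)). nra. Qed.

Lemma construct A t : in_B A -> 0 <= t <= 1 ->
  exists B, in_B B /\ piA B = mkC3 (Cmul (RtoC t) (a21 A)) (Cmul (RtoC t) (Mtr A)) (Mdet A).
Proof.
  intros HA Ht. destruct (B_to_FD A HA) as [_ [_ [HD HF]]].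
  destruct A as [[a b] [c d] [e f] [g h]].
  unfold D2, Frob in *. simpl in HD, HF.
  pose proof (gram_id a b c d e f g h) as Hg.
  set (pr := a*g - b*h - (c*e - d*f)). set (pi := a*h + b*g - (c*f + d*e)).
  assert (Hdet : Cnorm2 (Mdet (mkM2 (mkC a b) (mkC c d) (mkC e f) (mkC g h))) = pr*pr+pi*pi)
    by (unfold Cnorm2, Mdet, Csub, Cmul; simpl; unfold pr, pi; ring).
  rewrite Hdet in Hg, HD, HF.
  set (FF := a*a+b*b+(c*c+d*d)+(e*e+f*f)+(g*g+h*h)) in *.
  unfold Cnorm2 in HF; simpl in HF. fold FF in HF.
  set (xr := t*t*((a-g)*(a-g) - (b-h)*(b-h))). set (xi := t*t*(2*(a-g)*(b-h))).
  set (yr := -4*(1-t*t)*pr). set (yi := -4*(1-t*t)*pi).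
  set (k1 := t*t*((a-g)*(a-g)+(b-h)*(b-h))). set (k2 := 2*(1-t*t)*FF).
  assert (Hk1 : 0 <= k1) by (unfold k1; apply Rmult_le_pos; [nra| pose proof (Rle_0_sqr (a-g)); pose proof (Rle_0_sqr (b-h)); unfold Rsqr in *; lra]).
  assert (HFF : 0 <= FF) by (unfold FF; nra).
  assert (Hk2 : 0 <= k2) by (unfold k2; apply Rmult_le_pos; nra).
  assert (Hx : xr*xr+xi*xi = k1*k1) by (unfold xr, xi, k1; ring).
  assert (Hpp : pr*pr+pi*pi <= FF*FF/4).
  { rewrite <- Hg. unfold FF.
    replace (a*a+b*b+(c*c+d*d)+(e*e+f*f)+(g*g+h*h)) with ((a*a+b*b+e*e+f*f)+(c*c+d*d+g*g+h*h)) by ring.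
    apply amgm. }
  assert (Hy : yr*yr+yi*yi <= k2*k2).
  { assert (E1 : yr*yr+yi*yi = 16*((1-t*t)*(1-t*t))*(pr*pr+pi*pi)) by (unfold yr, yi; ring).
    assert (E2 : k2*k2 = 16*((1-t*t)*(1-t*t))*(FF*FF/4)) by (unfold k2; field).
    rewrite E1, E2. apply Rmult_le_compat_l; [pose proof (Rle_0_sqr (1-t*t)); unfold Rsqr in *; lra|lra]. }
  pose proof (tri _ _ _ _ _ _ Hk1 Hk2 Hx Hy) as Htri.
  destruct (csqrt (xr+yr) (xi+yi)) as [X [Y [HX HY]]].
  pose proof (sqrt_bound _ _ _ _ _ HX HY Htri ltac:(lra)) as Hw.
  exists (mkM2 (mkC ((t*(a+g)+X)/2) ((t*(b+h)+Y)/2)) (mkC (t*c) (t*d)) (mkC (t*e) (t*f))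
               (mkC ((t*(a+g)-X)/2) ((t*(b+h)-Y)/2))).
  assert (Hdet2 : Mdet (mkM2 (mkC ((t*(a+g)+X)/2) ((t*(b+h)+Y)/2)) (mkC (t*c) (t*d)) (mkC (t*e) (t*f))
               (mkC ((t*(a+g)-X)/2) ((t*(b+h)-Y)/2))) = Mdet (mkM2 (mkC a b) (mkC c d) (mkC e f) (mkC g h))).
  { unfold Mdet, Csub, Cmul; simpl. unfold xr, yr, xi, yi, pr, pi in *. f_equal; nra. }
  split.
  - apply FD_to_B; unfold D2, Frob; rewrite Hdet2, Hdet; [lra|].
    unfold Cnorm2; simpl.
    assert (E : ((t*(a+g)+X)/2)*((t*(a+g)+X)/2) + ((t*(b+h)+Y)/2)*((t*(b+h)+Y)/2)
      + ((t*c)*(t*c) + (t*d)*(t*d)) + ((t*e)*(t*e) + (t*f)*(t*f))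
      + (((t*(a+g)-X)/2)*((t*(a+g)-X)/2) + ((t*(b+h)-Y)/2)*((t*(b+h)-Y)/2))
      = FF - (k1 + k2)/2 + (X*X+Y*Y)/2) by (unfold k1, k2, FF; field).
    lra.
  - unfold piA, Mtr, RtoC, Cmul, Cadd; simpl. rewrite Hdet2. f_equal; f_equal; field.
Qed.

Definition Mscale (z : Defs.C) (A : M2) : M2 :=
  mkM2 (Cmul z (a11 A)) (Cmul z (a12 A)) (Cmul z (a21 A)) (Cmul z (a22 A)).

Lemma Cnorm2_mul z w : Cnorm2 (Cmul z w) = Cnorm2 z * Cnorm2 w.
Proof. unfold Cnorm2, Cmul; simpl; ring. Qed.

Lemma Cnorm2_ge0 z : 0 <= Cnorm2 z.
Proof. unfold Cnorm2. nra. Qed.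

Lemma scale_B z A : in_B A -> in_Delta z -> in_B (Mscale z A).
Proof.
  intros [c [Hc Hn]] Hz. exists c. split; auto. intro v.
  assert (E : C2norm2 (Mapply (Mscale z A) v) = Cnorm2 z * C2norm2 (Mapply A v)).
  { destruct z, A as [[] [] [] []], v as [[] []]. unfold C2norm2, Mapply, Cnorm2, Cadd, Cmul; simpl; ring. }
  rewrite E. specialize (Hn v). unfold in_Delta in Hz.
  assert (0 <= C2norm2 (Mapply A v)) by (unfold C2norm2; pose proof (Cnorm2_ge0 (v1 (Mapply A v))); pose proof (Cnorm2_ge0 (v2 (Mapply A v))); lra).
  pose proof (Cnorm2_ge0 z).
  assert (Cnorm2 z * C2norm2 (Mapply A v) <= 1 * C2norm2 (Mapply A v)) by (apply Rmult_le_compat_r; lra).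
  lra.
Qed.

Lemma pi_scale z A : piA (Mscale z A) = qb_act z (piA A).
Proof.
  destruct z, A as [[] [] [] []]. unfold piA, qb_act, Mscale, Mtr, Mdet, Cadd, Csub, Cmul; simpl.
  f_equal; f_equal; ring.
Qed.

Lemma qb_P : quasi_balanced_112 in_P.
Proof.
  intros x z [A [HA <-]] Hz. exists (Mscale z A). split. apply scale_B; auto. apply pi_scale.
Qed.

Lemma star_P : starlike0 in_P.
Proof.
  intros x r [A [HA <-]] Hr.
  set (t := sqrt r). assert (Ht : t*t = r) by (apply sqrt_sqrt; lra).
  assert (Ht0 : 0 <= t) by apply sqrt_pos.
  assert (Ht1 : t <= 1) by (unfold t; rewrite <- sqrt_1; apply sqrt_le_1_alt; lra).
  destruct (construct A t HA (conj Ht0 Ht1)) as [B [HB HpB]].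
  exists (Mscale (RtoC t) B). split.
  - apply scale_B; auto. unfold in_Delta, Cnorm2, RtoC; simpl. nra.
  - rewrite pi_scale, HpB. rewrite <- Ht. destruct A as [[] [] [] []].
    unfold qb_act, C3scale, piA, Mtr, Mdet, RtoC, Cadd, Csub, Cmul; simpl. f_equal; f_equal; ring.
Qed.

Lemma dist_mul z a b : Cnorm2 z <= 1 -> Cnorm2 (Csub (Cmul z a) (Cmul z b)) <= Cnorm2 (Csub a b).
Proof.
  intros Hz. replace (Csub (Cmul z a) (Cmul z b)) with (Cmul z (Csub a b))
    by (destruct z, a, b; unfold Csub, Cmul; simpl; f_equal; ring).
  rewrite Cnorm2_mul. pose proof (Cnorm2_ge0 (Csub a b)).
  assert (Cnorm2 z * Cnorm2 (Csub a b) <= 1 * Cnorm2 (Csub a b)) by (apply Rmult_le_compat_r; lra). lra.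
Qed.

Lemma qb_Pbar : quasi_balanced_112 in_Pbar.
Proof.
  intros x z Hx Hz eps He. destruct (Hx eps He) as [y [Hy Hd]].
  exists (qb_act z y). split. apply qb_P; auto.
  unfold C3dist2 in *; simpl.
  assert (Hzz : Cnorm2 (Cmul z z) <= 1).
  { rewrite Cnorm2_mul. unfold in_Delta in Hz. pose proof (Cnorm2_ge0 z).
    assert (Cnorm2 z * Cnorm2 z <= 1 * 1) by (apply Rmult_le_compat; lra). lra. }
  pose proof (dist_mul z (x1 x) (x1 y) Hz). pose proof (dist_mul z (x2 x) (x2 y) Hz).
  pose proof (dist_mul (Cmul z z) (x3 x) (x3 y) Hzz). lra.
Qed.

Lemma star_Pbar : starlike0 in_Pbar.
Proof.
  intros x r Hx Hr eps He. destruct (Hx eps He) as [y [Hy Hd]].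
  exists (C3scale (RtoC r) y). split. apply star_P; auto.
  unfold C3dist2 in *; simpl.
  assert (Hz : Cnorm2 (RtoC r) <= 1) by (unfold Cnorm2, RtoC; simpl; nra).
  pose proof (dist_mul _ (x1 x) (x1 y) Hz). pose proof (dist_mul _ (x2 x) (x2 y) Hz).
  pose proof (dist_mul _ (x3 x) (x3 y) Hz). lra.
Qed.

Definition x0 : C3 := mkC3 (mkC 0 0) (mkC (9/5) 0) (mkC (81/100) 0).
Definition wm : Defs.C := mkC (-1) 0.

Lemma x0_P : in_P x0.
Proof.
  exists (mkM2 (mkC (9/10) 0) (mkC 0 0) (mkC 0 0) (mkC (9/10) 0)). split.
  - exists (9/10). split. lra. intros [[] []].
    unfold C2norm2, Mapply, Cnorm2, Cadd, Cmul; simpl. nra.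
  - unfold piA, x0, Mtr, Mdet, Cadd, Csub, Cmul; simpl. f_equal; f_equal; lra.
Qed.

Lemma not_Pbar : ~ in_Pbar (C3scale wm x0).
Proof.
  intro H. destruct (H (1/100) ltac:(lra)) as [y [[A [HA <-]] Hd]].
  destruct (B_to_FD A HA) as [H1 [H2 _]].
  destruct A as [[a b] [c d] [e f] [g h]].
  unfold C3dist2, C3scale, wm, x0, piA, Mtr, Mdet, Cnorm2, Csub, Cadd, Cmul in Hd, H1, H2; simpl in Hd, H1, H2.
  set (T1 := (-1 * 0 - 0 * 0 - e) * (-1 * 0 - 0 * 0 - e) + (-1 * 0 + 0 * 0 - f) * (-1 * 0 + 0 * 0 - f)) in Hd.
  assert (HT1 : e*e+f*f = T1) by (unfold T1; ring).
  set (T2 := (-1 * (9 / 5) - 0 * 0 - (a + g)) * (-1 * (9 / 5) - 0 * 0 - (a + g)) +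
        (-1 * 0 + 0 * (9 / 5) - (b + h)) * (-1 * 0 + 0 * (9 / 5) - (b + h))) in Hd.
  assert (ET2 : T2 = (a+g+9/5)*(a+g+9/5) + (b+h)*(b+h)) by (unfold T2; ring).
  assert (HT2 : (a+g+9/5)*(a+g+9/5) <= T2) by (rewrite ET2; pose proof (Rle_0_sqr (b+h)); unfold Rsqr in *; lra).
  set (T3 := (-1 * (81 / 100) - 0 * 0 - (a * g - b * h - (c * e - d * f))) *
     (-1 * (81 / 100) - 0 * 0 - (a * g - b * h - (c * e - d * f))) +
     (-1 * 0 + 0 * (81 / 100) - (a * h + b * g - (c * f + d * e))) *
     (-1 * 0 + 0 * (81 / 100) - (a * h + b * g - (c * f + d * e)))) in Hd.
  assert (ET3 : T3 = (a * g - b * h - (c * e - d * f) + 81/100)*(a * g - b * h - (c * e - d * f) + 81/100) + (a * h + b * g - (c * f + d * e))*(a * h + b * g - (c * f + d * e))) by (unfold T3; ring).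
  assert (HT3 : (a * g - b * h - (c * e - d * f) + 81/100)*(a * g - b * h - (c * e - d * f) + 81/100) <= T3) by (rewrite ET3; pose proof (Rle_0_sqr (a * h + b * g - (c * f + d * e))); unfold Rsqr in *; lra).
  assert (0 <= T1) by (rewrite <- HT1; pose proof (Rle_0_sqr e); pose proof (Rle_0_sqr f); unfold Rsqr in *; lra).
  assert (0 <= T2) by (pose proof (Rle_0_sqr (a+g+9/5)); unfold Rsqr in *; lra).
  assert (0 <= T3) by (pose proof (Rle_0_sqr (a * g - b * h - (c * e - d * f) + 81/100)); unfold Rsqr in *; lra).
  assert (Hef : e*e+f*f < 1/100) by lra.
  assert (Htr : (a+g+9/5)*(a+g+9/5) < 1/100) by lra.
  assert (Hdt : (a * g - b * h - (c * e - d * f) + 81/100)*(a * g - b * h - (c * e - d * f) + 81/100) < 1/100) by lra.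
  clear - H1 H2 Hef Htr Hdt.
  assert (Hs : a + g < -17/10) by nra.
  assert (Ha : -1 < a) by nra. assert (Hg : -1 < g) by nra.
  assert (Ha' : a < -7/10) by lra. assert (Hg' : g < -7/10) by lra.
  assert (Hag : 49/100 < a*g) by nra.
  assert (Hb : b*b < 51/100) by nra. assert (Hh : h*h < 51/100) by nra.
  assert (Hbh : b*h <= 51/100) by nra.
  assert (Hcd : c*c+d*d < 1) by nra.
  assert (Hce : (c*e - d*f)*(c*e-d*f) <= (c*c+d*d)*(e*e+f*f)).
  { assert (E : (c*c+d*d)*(e*e+f*f) = (c*e - d*f)*(c*e-d*f) + (c*f+d*e)*(c*f+d*e)) by ring.
    rewrite E. pose proof (Rle_0_sqr (c*f+d*e)); unfold Rsqr in *; lra. }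
  assert (Hce2 : (c*e - d*f)*(c*e-d*f) < 1/100) by nra.
  assert (Hce3 : c*e - d*f < 1/10) by nra.
  nra.
Qed.

Theorem theorem6p2 :
  quasi_balanced_112 in_P /\ quasi_balanced_112 in_Pbar /\
  starlike0 in_P /\ starlike0 in_Pbar /\
  (exists x w, in_P x /\ in_T w /\ ~ in_P (C3scale w x)) /\
  (exists x w, in_Pbar x /\ in_T w /\ ~ in_Pbar (C3scale w x)).
Proof.
  assert (HT : in_T wm) by (unfold in_T, wm, Cnorm2; simpl; ring).
  split. exact qb_P. split. exact qb_Pbar. split. exact star_P. split. exact star_Pbar.
  split.
  - exists x0, wm. split. exact x0_P. split. exact HT.
    intro HP. apply not_Pbar. intros eps He. exists (C3scale wm x0). split; auto.
    unfold C3dist2, Cnorm2, Csub; simpl. lra.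
  - exists x0, wm. split.
    + intros eps He. exists x0. split. exact x0_P. unfold C3dist2, Cnorm2, Csub; simpl. lra.
    + split. exact HT. exact not_Pbar.
Qed.
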